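(* Consider the Markov process described in the context with $K=1$, satisfying Assumption (A) and the ergodicity condition (E). Then for every $x=(x_1,\dots,x_c)\in\{-1,1\}^c$ the equation $(\mathrm{E}_x)$ has at least one root $\beta_0\in(0,1)$.
   Context: Fix integers $c\ge 1$ and $K\ge1$ (in the claim $K=1$). Consider an irreducible continuous-time Markov process on $V\cup W$, where $V$ is finite and $W=\{\mathbf n=(n_0,\dots,n_c): n_0\in\{0,1,\dots\},\ n_i\in\{0,1\}\}$. For each $i\in\{1,\dots,c\}$ and integer $k\le K$ there are nonnegative rates $a_{k,i},b_{k,i},c_{k,i},d_{k,i}$. From $\mathbf n\in W$, for each $i$ and $k\in\{-n_0,\dots,K\}$, the process jumps (changing only coordinates $0$ and $i$) from $(n_0,n_i)=(n_0,0)$ to $(n_0+k,1)$ at rate $a_{k,i}$ and to $(n_0+k,0)$ at rate $b_{k,i}$, and from $(n_0,1)$ to $(n_0+k,1)$ at rate $c_{k,i}$ and to $(n_0+k,0)$ at rate $d_{k,i}$; from $\mathbf n$ it jumps into $V$ with total rate $\sum_i\sum_{k\le -n_0-1}((1-n_i)(a_{k,i}+b_{k,i})+n_i(c_{k,i}+d_{k,i}))$; no other transitions leave $W$, and from $V$ no transitions go to states with $n_0\ge K$. Let $A_i(z)=\sum_{k=-\infty}^K a_{k,i}z^{K-k}$ and similarly $B_i,C_i,D_i$ with $b,c,d$. Assumption (A): for each $i$: (i) $A_i(1),B_i(1),C_i(1),D_i(1)<\infty$; (ii) $A_i(1),D_i(1)>0$; (iii) $A_i'(1),B_i'(1),C_i'(1),D_i'(1)<\infty$;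 (iv) $a_{K,i}=0$ or $d_{K,i}=0$; (v) $b_{K,i}=c_{K,i}\ne0$. Ergodicity condition (E): $0<\sum_{i=1}^c\frac{1}{A_i(1)+D_i(1)}\bigl(D_i(1)(A_i'(1)-KA_i(1)+B_i'(1)-KB_i(1))+A_i(1)(C_i'(1)-KC_i(1)+D_i'(1)-KD_i(1))\bigr)$. Let $F_i(z)=z^K(A_i(1)+B_i(1)-C_i(1)-D_i(1))-B_i(z)+C_i(z)$. For real $\beta_0\in[0,1]$ let $R_i(\beta_0)=\sqrt{F_i(\beta_0)^2+4A_i(\beta_0)D_i(\beta_0)}$ (nonnegative square root). For $x\in\{-1,1\}^c$, equation $(\mathrm E_x)$ in the unknown $\beta_0$ is \[0=\sum_{i=1}^c\Bigl(x_iR_i(\beta_0)+B_i(\beta_0)+C_i(\beta_0)-\beta_0^K\bigl(A_i(1)+B_i(1)+C_i(1)+D_i(1)\bigr)\Bigr).\] *)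

(* Defs.v *)
From Stdlib Require Import Reals Lra Lia.
From Coquelicot Require Import Coquelicot.
Open Scope R_scope.

(* Indexing convention: a rate family r_{k,i} (k integer, k <= K) is stored as
   [r i j] with j = K - k : nat, i.e. r_{k,i} = r i (K - k).
   Classes i range over 1 <= i <= c. *)

(* Generating function  R_i(z) = sum_{k<=K} r_{k,i} z^{K-k} = sum_j r i j z^j. *)
Definition gf (r : nat -> R) (z : R) : R := Series (fun j => r j * z ^ j).

Definition gf'1 (r : nat -> R) : R := Series (fun j => INR j * r j).

Definition Fi (K : nat) (a b c d : nat -> R) (z : R) : R :=
  z ^ K * (gf a 1 + gf b 1 - gf c 1 - gf d 1) - gf b z + gf c z.

Definition Ri (K : nat) (a b c d : nat -> R) (beta : R) : R :=
  sqrt (Fi K a b c d beta ^ 2 + 4 * gf a beta * gf d beta).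

Definition Ex_rhs (K c : nat) (a b cr d : nat -> nat -> R) (x : nat -> R)
    (beta : R) : R :=
  sum_n_m (fun i =>
      x i * Ri K (a i) (b i) (cr i) (d i) beta + gf (b i) beta + gf (cr i) beta
      - beta ^ K * (gf (a i) 1 + gf (b i) 1 + gf (cr i) 1 + gf (d i) 1)) 1 c.

Definition assumptionA (K : nat) (a b c d : nat -> R) : Prop :=
  (forall j, 0 <= a j /\ 0 <= b j /\ 0 <= c j /\ 0 <= d j) /\
  (ex_series a /\ ex_series b /\ ex_series c /\ ex_series d) /\
  (0 < gf a 1 /\ 0 < gf d 1) /\
  (ex_series (fun j => INR j * a j) /\ ex_series (fun j => INR j * b j) /\
   ex_series (fun j => INR j * c j) /\ ex_series (fun j => INR j * d j)) /\
  (* (iv): a_{K,i} = 0 or d_{K,i} = 0  (k = K  <->  j = 0) *)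
  (a 0%nat = 0 \/ d 0%nat = 0) /\
  (b 0%nat = c 0%nat /\ b 0%nat <> 0).

Definition ergodic (K c : nat) (a b cr d : nat -> nat -> R) : Prop :=
  0 < sum_n_m (fun i =>
        / (gf (a i) 1 + gf (d i) 1) *
        (gf (d i) 1 * (gf'1 (a i) - INR K * gf (a i) 1 + gf'1 (b i) - INR K * gf (b i) 1)
         + gf (a i) 1 * (gf'1 (cr i) - INR K * gf (cr i) 1 + gf'1 (d i) - INR K * gf (d i) 1)))
      1 c.

(* Main.v *)
Require Import Defs.
From Stdlib Require Import Reals.
From Coquelicot Require Import Coquelicot.
Open Scope R_scope.
From Stdlib Require Import Lra Lia Psatz.

Definition Hyp (a : nat -> R) : Prop :=
  (forall j, 0 <= a j) /\ ex_series a /\ ex_series (fun j => INR j * a j).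

Lemma Rabs_bnd a b : Rabs a <= b -> - b <= a <= b.
Proof. unfold Rabs; destruct Rcase_abs; lra. Qed.

Lemma pow_01 (b : R) n : 0 <= b <= 1 -> 0 <= b ^ n <= 1.
Proof. intros Hb. induction n; simpl; [lra|]. nra. Qed.

Lemma pow_up (b : R) n : 0 <= b <= 1 -> 1 - b ^ n <= INR n * (1 - b).
Proof.
  intros Hb. induction n; [simpl; lra|].
  pose proof (pow_01 b n Hb). rewrite S_INR. change (b ^ S n) with (b * b ^ n). nra.
Qed.

Lemma pow_lo (b : R) n : 0 <= b <= 1 -> INR n * b ^ n * (1 - b) <= 1 - b ^ n.
Proof.
  intros Hb. induction n; [simpl; lra|].
  pose proof (pow_01 b n Hb). rewrite S_INR. change (b ^ S n) with (b * b ^ n).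
  assert (0 <= INR n) by apply pos_INR.
  assert (0 <= (INR n + 1) * (1 - b) * (b ^ n * (1 - b))).
  { apply Rmult_le_pos; [apply Rmult_le_pos|]; nra. }
  nra.
Qed.

Lemma pow_lip (u v : R) n : 0 <= u <= 1 -> 0 <= v <= 1 ->
  Rabs (u ^ n - v ^ n) <= INR n * Rabs (u - v).
Proof.
  intros Hu Hv. induction n.
  - simpl. rewrite Rminus_diag, Rabs_R0. lra.
  - change (u ^ S n) with (u * u ^ n). change (v ^ S n) with (v * v ^ n).
    replace (u * u ^ n - v * v ^ n) with (u * (u ^ n - v ^ n) + v ^ n * (u - v)) by ring.
    eapply Rle_trans. apply Rabs_triang. rewrite !Rabs_mult.
    pose proof (pow_01 v n Hv). rewrite (Rabs_pos_eq u) by lra. rewrite (Rabs_pos_eq (v ^ n)) by lra.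
    rewrite S_INR. pose proof (Rabs_pos (u ^ n - v ^ n)). pose proof (Rabs_pos (u - v)). nra.
Qed.

Lemma pow_mono (b : R) j N : 0 <= b <= 1 -> (j <= N)%nat -> b ^ N <= b ^ j.
Proof.
  intros Hb HjN. replace N with (j + (N - j))%nat by lia. rewrite pow_add.
  pose proof (pow_01 b j Hb). pose proof (pow_01 b (N - j) Hb). nra.
Qed.

Lemma Series_zero : Series (fun _ => 0) = 0.
Proof.
  rewrite (Series_ext _ (fun n => 0 * (fun _ => 1) n)) by (intros; ring).
  rewrite Series_scal_l. ring.
Qed.

Lemma Series_nonneg (b : nat -> R) : (forall n, 0 <= b n) -> ex_series b -> 0 <= Series b.
Proof.
  intros Hb Hex. rewrite <- Series_zero. apply Series_le; auto. intros n; split; [lra|apply Hb].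
Qed.

Lemma ex_le_R (u v : nat -> R) : (forall n, Rabs (u n) <= v n) -> ex_series v -> ex_series u.
Proof. intros H Hv. apply (@ex_series_le R_AbsRing R_CompleteNormedModule u v); auto. Qed.

Lemma ex_gf a b : Hyp a -> 0 <= b <= 1 -> ex_series (fun j => a j * b ^ j).
Proof.
  intros [Ha [Hs _]] Hb. apply (ex_le_R _ a); auto.
  intros n.
  rewrite Rabs_mult. pose proof (pow_01 b n Hb). rewrite !Rabs_pos_eq by (auto; lra). specialize (Ha n). nra.
Qed.

Lemma gf_nonneg a b : Hyp a -> 0 <= b <= 1 -> 0 <= gf a b.
Proof.
  intros H Hb. unfold gf. apply Series_nonneg. intros n. destruct H as [Ha _].
  pose proof (pow_01 b n Hb). specialize (Ha n). nra. now apply ex_gf.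
Qed.

Lemma gf1_nonneg a : Hyp a -> 0 <= gf'1 a.
Proof.
  intros [Ha [_ Hs]]. unfold gf'1. apply Series_nonneg; auto.
  intros n. specialize (Ha n). pose proof (pos_INR n). nra.
Qed.

Lemma gf_diff a b : Hyp a -> 0 <= b <= 1 ->
  gf a 1 - gf a b = Series (fun j => a j * (1 - b ^ j)).
Proof.
  intros H Hb. unfold gf. rewrite <- Series_minus.
  - apply Series_ext. intros n. rewrite pow1. ring.
  - apply ex_gf; auto; lra.
  - apply ex_gf; auto.
Qed.

Lemma gf_up a b : Hyp a -> 0 <= b <= 1 ->
  0 <= gf a 1 - gf a b <= (1 - b) * gf'1 a.
Proof.
  intros H Hb. rewrite gf_diff by auto.
  destruct H as [Ha [Hs Hs']].
  assert (Hex : ex_series (fun j => a j * (1 - b ^ j))).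
  { apply (ex_le_R _ a); auto. intros n.
    pose proof (pow_01 b n Hb). specialize (Ha n).
    rewrite Rabs_pos_eq by nra. nra. }
  split.
  - apply Series_nonneg; auto. intros n. pose proof (pow_01 b n Hb). specialize (Ha n). nra.
  - unfold gf'1. rewrite <- Series_scal_l. apply Series_le.
    + intros n. pose proof (pow_01 b n Hb). pose proof (pow_up b n Hb). specialize (Ha n). split; nra.
    + apply (ex_series_scal_l (1 - b) _ Hs').
Qed.

Lemma gf_lip a u v : Hyp a -> 0 <= u <= 1 -> 0 <= v <= 1 ->
  Rabs (gf a u - gf a v) <= Rabs (u - v) * gf'1 a.
Proof.
  intros H Hu Hv. unfold gf. rewrite <- Series_minus by (apply ex_gf; auto).
  destruct H as [Ha [Hs Hs']].
  assert (Hb : forall n, Rabs (a n * u ^ n - a n * v ^ n) <= Rabs (u - v) * (INR n * a n)).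
  { intros n. rewrite <- Rmult_minus_distr_l, Rabs_mult, Rabs_pos_eq by auto.
    pose proof (pow_lip u v n Hu Hv). specialize (Ha n). nra. }
  assert (Hex2 : ex_series (fun n => Rabs (u - v) * (INR n * a n))).
  { apply (ex_series_scal_l (Rabs (u - v)) _ Hs'). }
  assert (Hex1 : ex_series (fun n => Rabs (a n * u ^ n - a n * v ^ n))).
  { apply (ex_le_R _ (fun n => Rabs (u - v) * (INR n * a n))); auto.
    intros n. rewrite Rabs_Rabsolu. auto. }
  eapply Rle_trans. apply Series_Rabs; auto.
  unfold gf'1. rewrite <- Series_scal_l. apply Series_le; auto.
  intros n; split; auto using Rabs_pos.
Qed.

Lemma gf_zero a : Hyp a -> gf a 0 = a 0%nat.
Proof.
  intros H. unfold gf. rewrite Series_incr_1.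
  - rewrite (Series_ext _ (fun _ => 0)). rewrite Series_zero. simpl. ring.
    intros n. simpl. ring.
  - apply ex_gf; auto; lra.
Qed.

Lemma gf_lo a : Hyp a -> forall del, 0 < del -> exists eta, 0 < eta < 1 /\
  forall b, eta <= b < 1 -> (1 - b) * (gf'1 a - del) <= gf a 1 - gf a b.
Proof.
  intros H del Hdel.
  pose proof (gf1_nonneg a H) as HA1. pose proof H as H0.
  destruct H as [Ha [Hs Hs']].
  pose proof (Series_correct _ Hs') as Hc.
  apply is_series_Reals in Hc.
  destruct (Hc (del / 2)) as [N HN]. lra.
  specialize (HN N (le_n N)). unfold R_dist in HN.
  set (P := sum_f_R0 (fun j => INR j * a j) N) in *.
  fold (gf'1 a) in HN.
  assert (HP : gf'1 a - del / 2 <= P).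
  { assert (Rabs (P - gf'1 a) <= del / 2) by lra. apply Rabs_bnd in H. lra. }
  assert (HP2 : P <= gf'1 a + del / 2).
  { assert (Rabs (P - gf'1 a) <= del / 2) by lra. apply Rabs_bnd in H. lra. }
  assert (HP0 : 0 <= P).
  { unfold P. apply cond_pos_sum. intros n. specialize (Ha n). pose proof (pos_INR n). nra. }
  set (K := del / (2 * (INR N + 1) * (gf'1 a + del / 2 + 1))).
  assert (HK : 0 < K).
  { unfold K. apply Rdiv_lt_0_compat; [lra|]. pose proof (pos_INR N). nra. }
  exists (1 - Rmin (1/2) K). split.
  { assert (0 < Rmin (1/2) K) by (apply Rmin_case; lra).
    pose proof (Rmin_l (1/2) K). lra. }
  intros b Hb.
  assert (Hh : 1 - b <= K) by (pose proof (Rmin_r (1/2) K); lra).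
  assert (Hb01 : 0 <= b <= 1) by (pose proof (Rmin_l (1/2) K); lra).
  rewrite gf_diff by (auto; lra).
  assert (Hex : ex_series (fun j => a j * (1 - b ^ j))).
  { apply (ex_le_R _ a); auto. intros n.
    pose proof (pow_01 b n Hb01). specialize (Ha n).
    rewrite Rabs_pos_eq by nra. nra. }
  rewrite (Series_incr_n _ (S N)) by (auto; lia). simpl pred.
  assert (Htail : 0 <= Series (fun k => a (S N + k)%nat * (1 - b ^ (S N + k)))).
  { apply Series_nonneg.
    - intros n. pose proof (pow_01 b (S N + n) Hb01). specialize (Ha (S N + n)%nat). nra.
    - apply (ex_series_incr_n _ (S N)) in Hex. exact Hex. }
  assert (Hsum : sum_f_R0 (fun i => (INR i * a i) * (b ^ N * (1 - b))) N
                 <= sum_f_R0 (fun j => a j * (1 - b ^ j)) N).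
  { apply sum_Rle. intros n Hn.
    pose proof (pow_lo b n Hb01). pose proof (pow_mono b n N Hb01 Hn).
    specialize (Ha n). pose proof (pos_INR n).
    assert (INR n * a n * (b ^ N * (1 - b)) <= INR n * a n * (b ^ n * (1 - b))).
    { apply Rmult_le_compat_l; [nra|]. apply Rmult_le_compat_r; lra. }
    nra. }
  rewrite <- scal_sum in Hsum. fold P in Hsum.
  pose proof (pow_up b N Hb01) as HbN.
  assert (HNK : INR N * (1 - b) * (gf'1 a + del / 2) <= del / 2).
  { assert (INR N * (1 - b) * (gf'1 a + del / 2) <= INR N * K * (gf'1 a + del / 2)).
    { apply Rmult_le_compat_r; [lra|]. apply Rmult_le_compat_l; [apply pos_INR|lra]. }
    assert (INR N * K * (gf'1 a + del / 2) <= del / 2).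
    { unfold K. pose proof (pos_INR N).
      replace (INR N * (del / (2 * (INR N + 1) * (gf'1 a + del / 2 + 1))) * (gf'1 a + del / 2))
        with (del / 2 * ((INR N / (INR N + 1)) * ((gf'1 a + del / 2) / (gf'1 a + del / 2 + 1))))
        by (field; lra).
      assert (INR N / (INR N + 1) <= 1).
      { apply Rmult_le_reg_r with (INR N + 1); [lra|]. unfold Rdiv. rewrite Rmult_assoc, Rinv_l; lra. }
      assert ((gf'1 a + del / 2) / (gf'1 a + del / 2 + 1) <= 1).
      { apply Rmult_le_reg_r with (gf'1 a + del / 2 + 1); [lra|]. unfold Rdiv. rewrite Rmult_assoc, Rinv_l; lra. }
      assert (0 <= INR N / (INR N + 1)) by (apply Rdiv_le_0_compat; lra).
      assert (0 <= (gf'1 a + del / 2) / (gf'1 a + del / 2 + 1)) by (apply Rdiv_le_0_compat; lra).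
      assert (INR N / (INR N + 1) * ((gf'1 a + del / 2) / (gf'1 a + del / 2 + 1)) <= 1) by nra.
      nra. }
    lra. }
  assert (HbP : gf'1 a - del <= b ^ N * P).
  { assert ((1 - INR N * (1 - b)) * P <= b ^ N * P) by (apply Rmult_le_compat_r; lra).
    assert (INR N * (1 - b) * P <= INR N * (1 - b) * (gf'1 a + del / 2)).
    { apply Rmult_le_compat_l; [|lra]. pose proof (pos_INR N). nra. }
    nra. }
  assert (0 <= 1 - b) by lra.
  assert ((1 - b) * (gf'1 a - del) <= (1 - b) * (b ^ N * P)) by (apply Rmult_le_compat_l; lra).
  nra.
Qed.

Lemma alg_term (A B C D A1 B1 C1 D1 eps x : R) :
  0 < A -> 0 < D -> 0 <= B -> 0 <= C -> 0 < eps -> (x = 1 \/ x = -1) ->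
  exists del, 0 < del /\ forall h qa qb qc qd,
    0 < h < del ->
    0 <= qa <= A1 -> A1 - del <= qa ->
    0 <= qb <= B1 -> B1 - del <= qb ->
    0 <= qc <= C1 -> C1 - del <= qc ->
    0 <= qd <= D1 -> D1 - del <= qd ->
    x * sqrt (((1 - h) * (A + B - C - D) - (B - h * qb) + (C - h * qc)) ^ 2
              + 4 * (A - h * qa) * (D - h * qd))
    + (B - h * qb) + (C - h * qc) - (1 - h) * (A + B + C + D)
    <= h * (-2 * (/ (A + D) * (D * (A1 - A + B1 - B) + A * (C1 - C + D1 - D))) + eps).
Proof.
  intros HA HD HB HC He Hx.
  set (s := A + D). set (S := A + B - C - D). set (T := A + B + C + D).
  set (E := D * (A1 - A + B1 - B) + A * (C1 - C + D1 - D)).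
  set (tau := -2 * (/ s * E) + eps).
  set (U := Rabs S + Rabs B1 + Rabs C1).
  set (W := T + Rabs B1 + Rabs C1).
  set (K1 := U ^ 2 + 4 * Rabs A1 * Rabs D1 + 2 * Rabs tau * W).
  assert (Hs : 0 < s) by (unfold s; lra).
  assert (HK1 : 0 <= K1).
  { unfold K1. assert (0 <= Rabs tau) by apply Rabs_pos.
    assert (0 <= W) by (unfold W, T; pose proof (Rabs_pos B1); pose proof (Rabs_pos C1); lra).
    pose proof (Rabs_pos A1); pose proof (Rabs_pos D1). nra. }
  assert (HW : 0 <= W) by (unfold W, T; pose proof (Rabs_pos B1); pose proof (Rabs_pos C1); lra).
  assert (Hta : 0 <= Rabs tau) by apply Rabs_pos.
  set (d1 := eps * s / (8 * s + K1 + 1)).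
  set (d2 := s / (W + Rabs tau + 1)).
  assert (Hd1 : 0 < d1) by (unfold d1; apply Rdiv_lt_0_compat; nra).
  assert (Hd2 : 0 < d2) by (unfold d2; apply Rdiv_lt_0_compat; lra).
  exists (Rmin d1 d2). split. { apply Rmin_case; lra. }
  intros h qa qb qc qd Hh Ha Ha' Hb Hb' Hc Hc' Hd Hd'.
  assert (Hhd1 : h < d1) by (pose proof (Rmin_l d1 d2); lra).
  assert (Hhd2 : h < d2) by (pose proof (Rmin_r d1 d2); lra).
  assert (Hdel1 : Rmin d1 d2 <= d1) by apply Rmin_l.
  set (w := T - qb - qc).
  set (L := s - h * w).
  assert (Hw : Rabs w <= W).
  { unfold w, W. apply Rabs_le. split.
    - assert (0 <= T) by (unfold T; lra). pose proof (Rle_abs B1); pose proof (Rle_abs C1). lra.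
    - pose proof (Rabs_pos B1); pose proof (Rabs_pos C1). lra. }
  assert (HhW : h * (W + Rabs tau) <= s).
  { unfold d2 in Hhd2. apply Rlt_le.
    assert (h * (W + Rabs tau + 1) < s).
    { apply (Rmult_lt_compat_r (W + Rabs tau + 1)) in Hhd2; [|lra].
      unfold Rdiv in Hhd2. rewrite Rmult_assoc, Rinv_l in Hhd2; lra. }
    nra. }
  assert (Hwb : - W <= w <= W) by (apply Rabs_bnd in Hw; exact Hw).
  assert (HLt : 0 <= L + h * tau).
  { unfold L. pose proof (Rabs_bnd tau (Rabs tau) (Rle_refl _)). nra. }
  assert (Hterm_eq : (B - h * qb) + (C - h * qc) - (1 - h) * T = - L).
  { unfold L, w, s, T. ring. }
  set (X := ((1 - h) * S - (B - h * qb) + (C - h * qc)) ^ 2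
              + 4 * (A - h * qa) * (D - h * qd)).
  enough (Hg : x * sqrt X - L <= h * tau) by lra.
  clear Hterm_eq.
  assert (Htaus : tau * s = -2 * E + eps * s).
  { unfold tau. field. lra. }
  destruct Hx as [Hx | Hx]; subst x.
  -
    set (u := S - qb + qc).
    set (M := u ^ 2 + 4 * qa * qd - w ^ 2).
    set (Eq := D * (qa + qb - A - B) + A * (qc + qd - C - D)).
    assert (HX : X - (L + h * tau) ^ 2
                 = h * (4 * (E - Eq) - 2 * eps * s + h * (M + 2 * tau * w - tau ^ 2))).
    { assert (X - (L + h * tau) ^ 2
              = h * (-4 * Eq - 2 * (tau * s) + h * (M + 2 * tau * w - tau ^ 2))).
      { unfold X, L, M, u, w, Eq, S, T, s. ring. }
      rewrite H, Htaus. ring. }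
    assert (HE : E - Eq <= 2 * s * Rmin d1 d2).
    { unfold E, Eq, s. nra. }
    assert (Hu : Rabs u <= U).
    { unfold u, U. eapply Rle_trans. apply Rabs_triang.
      eapply Rle_trans. apply Rplus_le_compat_r. apply Rabs_triang.
      rewrite Rabs_Ropp. rewrite (Rabs_pos_eq qb), (Rabs_pos_eq qc) by lra.
      pose proof (Rle_abs B1); pose proof (Rle_abs C1); lra. }
    assert (HM : M + 2 * tau * w - tau ^ 2 <= K1).
    { unfold M, K1.
      assert (u ^ 2 <= U ^ 2).
      { rewrite <- (pow2_abs u). pose proof (Rabs_pos u). nra. }
      assert (qa * qd <= Rabs A1 * Rabs D1).
      { pose proof (Rle_abs A1); pose proof (Rle_abs D1). nra. }
      assert (tau * w <= Rabs tau * W).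
      { eapply Rle_trans. apply Rle_abs. rewrite Rabs_mult.
        apply Rmult_le_compat; auto using Rabs_pos. lra. }
      nra. }
    assert (Hbr : 4 * (E - Eq) - 2 * eps * s + h * (M + 2 * tau * w - tau ^ 2) <= 0).
    { assert (h * (M + 2 * tau * w - tau ^ 2) <= h * K1) by nra.
      assert (h * K1 <= d1 * K1) by nra.
      assert (8 * s * d1 + d1 * K1 <= 2 * eps * s).
      { unfold d1. unfold Rdiv.
        replace (8 * s * (eps * s * / (8 * s + K1 + 1)) + eps * s * / (8 * s + K1 + 1) * K1)
          with (eps * s * ((8 * s + K1) / (8 * s + K1 + 1))) by (field; lra).
        assert ((8 * s + K1) / (8 * s + K1 + 1) <= 1).
        { apply Rmult_le_reg_r with (8 * s + K1 + 1). lra.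
          unfold Rdiv. rewrite Rmult_assoc, Rinv_l by lra. lra. }
        assert (0 < eps * s) by nra.
        assert (eps * s * ((8 * s + K1) / (8 * s + K1 + 1)) <= eps * s * 1)
          by (apply Rmult_le_compat_l; lra).
        lra. }
      assert (2 * s * Rmin d1 d2 <= 2 * s * d1) by nra.
      lra. }
    assert (HXle : X <= (L + h * tau) ^ 2) by nra.
    assert (sqrt X <= L + h * tau).
    { rewrite <- (sqrt_pow2 (L + h * tau)) by lra. apply sqrt_le_1_alt. lra. }
    lra.
  - pose proof (sqrt_pos X).
    assert (- L <= h * tau).
    { unfold L. pose proof (Rabs_bnd tau (Rabs tau) (Rle_refl _)). nra. }
    lra.
Qed.

Lemma lip_cont (f : R -> R) (L : R) : 0 <= L ->
  (forall u v, Rabs (f u - f v) <= L * Rabs (u - v)) -> continuity f.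
Proof.
  intros HL H x0 eps Heps.
  exists (eps / (L + 1)). split.
  - apply Rdiv_lt_0_compat; lra.
  - intros y [_ Hy]. simpl in *. unfold R_dist in *.
    eapply Rle_lt_trans. apply H.
    assert (L * Rabs (y - x0) <= L * (eps / (L + 1))) by (apply Rmult_le_compat_l; lra).
    assert (L * (eps / (L + 1)) < eps).
    { replace (L * (eps / (L + 1))) with (eps * (L / (L + 1))) by (field; lra).
      assert (L / (L + 1) < 1).
      { apply Rmult_lt_reg_r with (L + 1); [lra|]. unfold Rdiv. rewrite Rmult_assoc, Rinv_l; lra. }
      nra. }
    lra.
Qed.

Definition cl (b : R) : R := Rmax 0 (Rmin 1 b).

Lemma cl_01 b : 0 <= cl b <= 1.
Proof. unfold cl, Rmax, Rmin. repeat destruct Rle_dec; lra. Qed.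

Lemma cl_id b : 0 <= b <= 1 -> cl b = b.
Proof. unfold cl, Rmax, Rmin. repeat destruct Rle_dec; lra. Qed.

Lemma cl_lip u v : Rabs (cl u - cl v) <= 1 * Rabs (u - v).
Proof. unfold cl, Rmax, Rmin. repeat destruct Rle_dec; unfold Rabs; repeat destruct Rcase_abs; lra. Qed.

Lemma cont_term (ga gb gc gd cl' : R -> R) (x S T : R) :
  continuity ga -> continuity gb -> continuity gc -> continuity gd -> continuity cl' ->
  (forall b, 0 <= ga b) -> (forall b, 0 <= gd b) ->
  continuity (fun b => x * sqrt ((cl' b ^ 1 * S - gb b + gc b) ^ 2 + 4 * ga b * gd b)
                       + gb b + gc b - cl' b ^ 1 * T).
Proof.
  intros Ha Hb Hc Hd Hl Ha0 Hd0 b0.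
  set (inner := fun b => (cl' b ^ 1 * S - gb b + gc b) ^ 2 + 4 * ga b * gd b).
  assert (Hin : continuity_pt inner b0).
  { unfold inner.
    apply continuity_pt_ext with (f := fun b => (cl' b * S - gb b + gc b) * (cl' b * S - gb b + gc b) + 4 * ga b * gd b).
    { intros; simpl; ring. }
    apply (continuity_pt_plus (fun b => (cl' b * S - gb b + gc b) * (cl' b * S - gb b + gc b)) (fun b => 4 * ga b * gd b)).
    - assert (H1 : continuity_pt (fun b => cl' b * S - gb b + gc b) b0).
      { apply (continuity_pt_plus (fun b => cl' b * S - gb b) gc); auto.
        apply (continuity_pt_minus (fun b => cl' b * S) gb); auto.
        apply (continuity_pt_mult cl' (fun _ => S)); auto.
        apply continuity_pt_const; intros u v; reflexivity. }
      apply (continuity_pt_mult (fun b => cl' b * S - gb b + gc b) (fun b => cl' b * S - gb b + gc b)); auto.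
    - apply (continuity_pt_mult (fun b => 4 * ga b) gd); auto.
      apply (continuity_pt_mult (fun _ => 4) ga); auto.
      apply continuity_pt_const; intros u v; reflexivity. }
  assert (Hsq : continuity_pt (fun b => sqrt (inner b)) b0).
  { apply (continuity_pt_comp inner sqrt). exact Hin.
    apply continuity_pt_sqrt. unfold inner.
    pose proof (Ha0 b0); pose proof (Hd0 b0).
    assert (0 <= (cl' b0 ^ 1 * S - gb b0 + gc b0) ^ 2) by (apply pow2_ge_0).
    nra. }
  apply continuity_pt_ext with (f := fun b => x * sqrt (inner b) + gb b + gc b - cl' b * T).
  { intros; unfold inner; simpl; ring. }
  apply (continuity_pt_minus (fun b => x * sqrt (inner b) + gb b + gc b) (fun b => cl' b * T)).
  - apply (continuity_pt_plus (fun b => x * sqrt (inner b) + gb b) gc); auto.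
    apply (continuity_pt_plus (fun b => x * sqrt (inner b)) gb); auto.
    apply (continuity_pt_mult (fun _ => x) (fun b => sqrt (inner b))); auto.
    apply continuity_pt_const; intros u v; reflexivity.
  - apply (continuity_pt_mult cl' (fun _ => T)); auto.
    apply continuity_pt_const; intros u v; reflexivity.
Qed.

Lemma continuity_ext (f1 f2 : R -> R) : (forall x, f1 x = f2 x) -> continuity f1 -> continuity f2.
Proof. intros H Hc x. apply (continuity_pt_ext f1 f2); auto. Qed.

Lemma cont_sum (G : nat -> R -> R) (c : nat) :
  (forall i, (1 <= i <= c)%nat -> continuity (G i)) ->
  continuity (fun b => sum_n_m (fun i => G i b) 1 c).
Proof.
  induction c; intros H.
  - apply continuity_ext with (f1 := fun _ => 0).
    { intros. rewrite sum_n_m_zero by lia. reflexivity. }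
    apply continuity_const. intros u v; reflexivity.
  - destruct c.
    + apply continuity_ext with (f1 := G 1%nat).
      { intros. rewrite sum_n_n. reflexivity. }
      apply H; lia.
    + apply continuity_ext with (f1 := fun b => sum_n_m (fun i => G i b) 1 (S c) + G (S (S c)) b).
      { intros. rewrite (sum_n_Sm _ 1 (S c)) by lia. reflexivity. }
      apply (continuity_plus (fun b => sum_n_m (fun i => G i b) 1 (S c)) (G (S (S c)))).
      * apply IHc. intros; apply H; lia.
      * apply H; lia.
Qed.

Lemma combine (P : nat -> R -> Prop) (c : nat) :
  (forall i, (1 <= i <= c)%nat -> exists eta, 0 < eta < 1 /\ forall b, eta <= b < 1 -> P i b) ->
  exists eta, 0 < eta < 1 /\ forall b, eta <= b < 1 -> forall i, (1 <= i <= c)%nat -> P i b.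
Proof.
  induction c; intros H.
  - exists (1/2). split; [lra|]. intros; lia.
  - destruct IHc as [e1 [He1 H1]]. { intros; apply H; lia. }
    destruct (H (S c)) as [e2 [He2 H2]]. lia.
    exists (Rmax e1 e2). split. { apply (Rmax_case e1 e2 (fun r => 0 < r < 1)); lra. }
    intros b Hb i Hi. destruct (Nat.eq_dec i (S c)).
    + subst. apply H2. pose proof (Rmax_r e1 e2). lra.
    + apply H1; [pose proof (Rmax_l e1 e2); lra | lia].
Qed.

Lemma sum_le_loc (u v : nat -> R) n m :
  (forall k, (n <= k <= m)%nat -> u k <= v k) -> sum_n_m u n m <= sum_n_m v n m.
Proof.
  intros H. rewrite (sum_n_m_ext_loc u (fun k => Rmin (u k) (v k))).
  - apply sum_n_m_le. intros; apply Rmin_r.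
  - intros k Hk. rewrite Rmin_left; auto.
Qed.

Lemma sum_pos (u : nat -> R) c : (1 <= c)%nat -> (forall k, (1 <= k <= c)%nat -> 0 < u k) ->
  0 < sum_n_m u 1 c.
Proof.
  induction c; intros Hc H. lia.
  destruct c. { rewrite sum_n_n. apply H; lia. }
  rewrite sum_n_Sm by lia.
  assert (0 < sum_n_m u 1 (S c)) by (apply IHc; [lia|intros; apply H; lia]).
  assert (0 < u (S (S c))) by (apply H; lia).
  change (0 < sum_n_m u 1 (S c) + u (S (S c))). lra.
Qed.

Lemma sum_lin (e : nat -> R) (k eps : R) c :
  sum_n_m (fun i => k * (-2 * e i + eps)) 1 c = k * (-2 * sum_n_m e 1 c + INR c * eps).
Proof.
  induction c.
  - rewrite !sum_n_m_zero by lia. simpl. change (@zero R_AbelianMonoid) with 0. ring.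
  - rewrite !sum_n_Sm by lia. rewrite IHc. rewrite S_INR.
    unfold plus; simpl; ring.
Qed.

Lemma q_bounds (h Dv U del : R) : 0 < h -> 0 <= Dv <= h * U -> h * (U - del) <= Dv ->
  0 <= Dv / h <= U /\ U - del <= Dv / h.
Proof.
  intros Hh [H1 H2] H3. split; [split|].
  - apply Rdiv_le_0_compat; lra.
  - apply Rmult_le_reg_r with h; [lra|]. unfold Rdiv. rewrite Rmult_assoc, Rinv_l by lra. lra.
  - apply Rmult_le_reg_r with h; [lra|]. unfold Rdiv. rewrite Rmult_assoc, Rinv_l by lra. lra.
Qed.

Lemma Rmax01 u v : 0 < u < 1 -> v < 1 -> 0 < Rmax u v < 1.
Proof. intros. unfold Rmax. destruct Rle_dec; lra. Qed.

Theorem lemma3 (c : nat) (a b cr d : nat -> nat -> R) :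
  (1 <= c)%nat ->
  (forall i, (1 <= i <= c)%nat -> assumptionA 1 (a i) (b i) (cr i) (d i)) ->
  ergodic 1 c a b cr d ->
  forall x : nat -> R,
    (forall i, (1 <= i <= c)%nat -> x i = 1 \/ x i = -1) ->
    exists beta0 : R, 0 < beta0 < 1 /\ Ex_rhs 1 c a b cr d x beta0 = 0.
Proof.
  intros Hc HA Herg x Hx.
  assert (HH : forall i, (1 <= i <= c)%nat -> Hyp (a i) /\ Hyp (b i) /\ Hyp (cr i) /\ Hyp (d i)
     /\ 0 < gf (a i) 1 /\ 0 < gf (d i) 1 /\ (a i 0%nat = 0 \/ d i 0%nat = 0)
     /\ b i 0%nat = cr i 0%nat /\ b i 0%nat <> 0).
  { intros i Hi. destruct (HA i Hi) as [Hnn [[E1 [E2 [E3 E4]]] [[P1 P2] [[F1 [F2 [F3 F4]]] [H4 [H5 H6]]]]]].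
    unfold Hyp. repeat split; auto; intros j; destruct (Hnn j) as (?&?&?&?); assumption. }
  set (e := fun i => / (gf (a i) 1 + gf (d i) 1) *
        (gf (d i) 1 * (gf'1 (a i) - INR 1 * gf (a i) 1 + gf'1 (b i) - INR 1 * gf (b i) 1)
         + gf (a i) 1 * (gf'1 (cr i) - INR 1 * gf (cr i) 1 + gf'1 (d i) - INR 1 * gf (d i) 1))).
  assert (Herg' : 0 < sum_n_m e 1 c) by exact Herg.
  set (erg := sum_n_m e 1 c) in *.
  assert (HcR : 0 < INR c) by (apply lt_0_INR; lia).
  set (eps := erg / INR c).
  assert (Heps : 0 < eps) by (apply Rdiv_lt_0_compat; lra).
  set (g := fun i b0 => x i * Ri 1 (a i) (b i) (cr i) (d i) b0 + gf (b i) b0 + gf (cr i) b0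
        - b0 ^ 1 * (gf (a i) 1 + gf (b i) 1 + gf (cr i) 1 + gf (d i) 1)).
  assert (HEx : forall b0, Ex_rhs 1 c a b cr d x b0 = sum_n_m (fun i => g i b0) 1 c) by reflexivity.
  assert (Hstep : forall i, (1 <= i <= c)%nat -> exists eta, 0 < eta < 1 /\
            forall b0, eta <= b0 < 1 -> g i b0 <= (1 - b0) * (-2 * e i + eps)).
  { intros i Hi. destruct (HH i Hi) as (Ha&Hb&Hcr&Hd&HA0&HD0&_).
    destruct (alg_term (gf (a i) 1) (gf (b i) 1) (gf (cr i) 1) (gf (d i) 1)
               (gf'1 (a i)) (gf'1 (b i)) (gf'1 (cr i)) (gf'1 (d i)) eps (x i))
      as [del [Hdel Halg]]; auto.
    { apply gf_nonneg; auto; lra. }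
    { apply gf_nonneg; auto; lra. }
    destruct (gf_lo _ Ha del Hdel) as [ea [Hea Ha']].
    destruct (gf_lo _ Hb del Hdel) as [eb [Heb Hb']].
    destruct (gf_lo _ Hcr del Hdel) as [ec [Hec Hc']].
    destruct (gf_lo _ Hd del Hdel) as [ed [Hed Hd']].
    set (eta := Rmax (Rmax (Rmax ea eb) (Rmax ec ed)) (1 - del / 2)).
    exists eta. split.
    { unfold eta. apply Rmax01; [|lra]. apply Rmax01; [apply Rmax01|]; [lra| |].
      - pose proof (Rmax01 ec ed Hec). lra.
      - pose proof (Rmax01 ec ed Hec). lra. }
    intros b0 Hb0.
    assert (Hm : ea <= b0 /\ eb <= b0 /\ ec <= b0 /\ ed <= b0 /\ 1 - del / 2 <= b0).
    { unfold eta in Hb0.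
      pose proof (Rmax_l (Rmax (Rmax ea eb) (Rmax ec ed)) (1 - del / 2)).
      pose proof (Rmax_r (Rmax (Rmax ea eb) (Rmax ec ed)) (1 - del / 2)).
      pose proof (Rmax_l (Rmax ea eb) (Rmax ec ed)).
      pose proof (Rmax_r (Rmax ea eb) (Rmax ec ed)).
      pose proof (Rmax_l ea eb). pose proof (Rmax_r ea eb).
      pose proof (Rmax_l ec ed). pose proof (Rmax_r ec ed). lra. }
    destruct Hm as (H1&H2&H3&H4&H5).
    assert (Hb01 : 0 <= b0 <= 1) by lra.
    set (h := 1 - b0).
    assert (Hh : 0 < h < del) by (unfold h; lra).
    pose proof (gf_up _ b0 Ha Hb01) as Ua. pose proof (gf_up _ b0 Hb Hb01) as Ub.
    pose proof (gf_up _ b0 Hcr Hb01) as Uc. pose proof (gf_up _ b0 Hd Hb01) as Ud.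
    specialize (Ha' b0 (conj H1 (proj2 Hb0))). specialize (Hb' b0 (conj H2 (proj2 Hb0))).
    specialize (Hc' b0 (conj H3 (proj2 Hb0))). specialize (Hd' b0 (conj H4 (proj2 Hb0))).
    fold h in Ua, Ub, Uc, Ud, Ha', Hb', Hc', Hd'.
    destruct (q_bounds h _ _ del (proj1 Hh) Ua Ha') as [Qa Qa'].
    destruct (q_bounds h _ _ del (proj1 Hh) Ub Hb') as [Qb Qb'].
    destruct (q_bounds h _ _ del (proj1 Hh) Uc Hc') as [Qc Qc'].
    destruct (q_bounds h _ _ del (proj1 Hh) Ud Hd') as [Qd Qd'].
    specialize (Halg h _ _ _ _ Hh Qa Qa' Qb Qb' Qc Qc' Qd Qd').
    assert (Ea : gf (a i) b0 = gf (a i) 1 - h * ((gf (a i) 1 - gf (a i) b0) / h)) by (field; lra).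
    assert (Eb : gf (b i) b0 = gf (b i) 1 - h * ((gf (b i) 1 - gf (b i) b0) / h)) by (field; lra).
    assert (Ec : gf (cr i) b0 = gf (cr i) 1 - h * ((gf (cr i) 1 - gf (cr i) b0) / h)) by (field; lra).
    assert (Ed : gf (d i) b0 = gf (d i) 1 - h * ((gf (d i) 1 - gf (d i) b0) / h)) by (field; lra).
    set (qa := (gf (a i) 1 - gf (a i) b0) / h) in *.
    set (qb := (gf (b i) 1 - gf (b i) b0) / h) in *.
    set (qc := (gf (cr i) 1 - gf (cr i) b0) / h) in *.
    set (qd := (gf (d i) 1 - gf (d i) b0) / h) in *.
    unfold g, Ri, Fi, e. change (INR 1) with 1.
    rewrite Ea, Eb, Ec, Ed.
    replace (b0 ^ 1) with (1 - h) by (unfold h; ring).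
    fold h.
    rewrite !Rmult_1_l. exact Halg. }
  destruct (combine _ c Hstep) as [eta [Heta Hall]].
  assert (Hneg : Ex_rhs 1 c a b cr d x eta < 0).
  { rewrite HEx.
    eapply Rle_lt_trans.
    - apply sum_le_loc. intros k Hk. apply (Hall eta (conj (Rle_refl _) (proj2 Heta)) k Hk).
    - rewrite sum_lin. fold erg.
      replace (INR c * eps) with erg by (unfold eps, Rdiv; rewrite Rmult_comm, Rmult_assoc, Rinv_l, Rmult_1_r; [reflexivity|lra]).
      assert (0 < 1 - eta) by lra. nra. }
  assert (Hpos : 0 < Ex_rhs 1 c a b cr d x 0).
  { rewrite HEx. apply sum_pos; auto. intros i Hi.
    destruct (HH i Hi) as (Ha&Hb&Hcr&Hd&HA0&HD0&H4&H5&H6).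
    assert (HR : Ri 1 (a i) (b i) (cr i) (d i) 0 = 0).
    { unfold Ri, Fi. rewrite !gf_zero by auto. transitivity (sqrt 0); [f_equal|apply sqrt_0].
      rewrite H5. destruct H4 as [H4|H4]; rewrite H4; simpl; ring. }
    unfold g. rewrite HR, !gf_zero by auto. rewrite H5 in H6 |- *.
    destruct Hcr as [Hcn _]. specialize (Hcn 0%nat).
    simpl. assert (0 < cr i 0%nat) by lra. lra. }
  set (f := fun t => - Ex_rhs 1 c a b cr d x (cl t)).
  assert (Hcont : continuity f).
  { unfold f. apply continuity_opp.
    apply continuity_ext with (f1 := fun t => sum_n_m (fun i => g i (cl t)) 1 c).
    { intros t. rewrite HEx. reflexivity. }
    apply (cont_sum (fun i t => g i (cl t))).
    intros i Hi. destruct (HH i Hi) as (Ha&Hb&Hcr&Hd&_).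
    assert (Hg : forall r, Hyp r -> continuity (fun t => gf r (cl t))).
    { intros r Hr. apply (lip_cont _ (gf'1 r)). apply gf1_nonneg; auto.
      intros u v. eapply Rle_trans. apply gf_lip; auto using cl_01.
      pose proof (cl_lip u v). pose proof (gf1_nonneg r Hr). nra. }
    unfold g, Ri, Fi.
    apply (cont_term (fun t => gf (a i) (cl t)) (fun t => gf (b i) (cl t))
             (fun t => gf (cr i) (cl t)) (fun t => gf (d i) (cl t)) cl (x i)); auto.
    - apply (lip_cont cl 1); [lra|]. apply cl_lip.
    - intros t. apply gf_nonneg; auto using cl_01.
    - intros t. apply gf_nonneg; auto using cl_01. }
  assert (Hf0 : f 0 < 0).
  { unfold f. rewrite cl_id by lra. lra. }
  assert (Hfe : 0 < f eta).
  { unfold f. rewrite cl_id by lra. lra. }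
  destruct (IVT f 0 eta Hcont (proj1 Heta) Hf0 Hfe) as [z [Hz Hfz]].
  assert (Hz01 : 0 <= z <= 1) by lra.
  unfold f in Hfz. rewrite cl_id in Hfz by auto.
  exists z. split; [|lra].
  split; [|lra].
  destruct (Rle_lt_or_eq_dec 0 z (proj1 Hz)) as [Hlt|Heq]; auto.
  subst z. lra.
Qed.
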